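(* Let $h$ be a Hessenberg function on $\{1,\dots,n\}$ with degree tuple $(\beta_n,\dots,\beta_1)$, and let $R=\mathbb{Z}[x_1,\dots,x_n]$. Then $R/J_h$ is a free $\mathbb{Z}$-module with basis (the images of) the monomials $$\mathcal{B}_h=\{x_1^{\alpha_1}x_2^{\alpha_2}\cdots x_n^{\alpha_n} : 0\le\alpha_i\le\beta_i-1,\ i=1,\dots,n\}.$$
   Context: A Hessenberg function is a map $h:\{1,\dots,n\}\to\{1,\dots,n\}$, $h_i:=h(i)$, with $i\le h_i\le n$ for all $i$ and $h_i\le h_{i+1}$ for $1\le i\le n-1$. Its degree tuple is $(\beta_n,\beta_{n-1},\dots,\beta_1)$ with $\beta_i=i-\#\{k: h_k<i\}$. For a set $S$ of variables, $\tilde e_r(S)$ denotes the complete homogeneous symmetric polynomial of degree $r$ in $S$ (sum of all degree-$r$ monomials in $S$, e.g. $\tilde e_2(x_3,x_4)=x_3^2+x_3x_4+x_4^2$). The ideal is $J_h=\langle \tilde e_{\beta_n}(x_n),\tilde e_{\beta_{n-1}}(x_{n-1},x_n),\dots,\tilde e_{\beta_1}(x_1,\dots,x_n)\rangle\subseteq R$, i.e. the $i$-th generator is $\tilde e_{\beta_i}(x_i,x_{i+1},\dots,x_n)$. *)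

(* Defs.v *)
From HB Require Import structures.
From mathcomp Require Import all_boot all_order all_algebra.
Unset Printing Implicit Defensive.
Import Order.TTheory GRing.Theory Num.Theory.
Local Open Scope ring_scope.

Fixpoint mpoly (n : nat) : comNzRingType :=
  if n is n'.+1 then ({poly (mpoly n')} : comNzRingType) else (int : comNzRingType).

(* mvar n j = x_{j+1} (0-based index j < n); x_n is the outermost 'X. *)
Fixpoint mvar (n : nat) (j : nat) {struct n} : mpoly n :=
  match n return mpoly n with
  | 0 => 0
  | n'.+1 => if j == n' then ('X : {poly mpoly n'}) else ((mvar n' j)%:P : {poly mpoly n'})
  end.

Definition X (n i : nat) : mpoly n := mvar n i.-1.

(* Complete homogeneous symmetric polynomial of degree r in the variables s:
   sum of all degree-r monomials, computed by splitting off the exponent of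
   the first variable. *)
Fixpoint hcomp {R : comNzRingType} (r : nat) (s : seq R) : R :=
  match s with
  | [::] => (r == 0%N)%:R
  | x :: s' => \sum_(k < r.+1) x ^+ k * hcomp (r - k) s'
  end.

Definition hessenberg (n : nat) (h : nat -> nat) : Prop :=
  (forall i, (1 <= i <= n)%N -> (i <= h i <= n)%N) /\
  (forall i, (1 <= i < n)%N -> (h i <= h i.+1)%N).

Definition beta (n : nat) (h : nat -> nat) (i : nat) : nat :=
  (i - count (fun k => h k < i) (iota 1 n))%N.

Definition Jgen (n : nat) (h : nat -> nat) (i : nat) : mpoly n :=
  hcomp (beta n h i) [seq X n j | j <- iota i (n - i).+1].

Definition inJ (n : nat) (h : nat -> nat) (f : mpoly n) : Prop :=
  exists g : nat -> mpoly n, f = \sum_(1 <= i < n.+1) g i * Jgen n h i.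

(* Exponent vectors a, with a i = alpha_{i+1}; exponents alpha_i <= beta_i - 1
   <= n - 1 always fit in 'I_n since beta_i <= i <= n. *)
Definition inB (n : nat) (h : nat -> nat) (a : {ffun 'I_n -> 'I_n}) : bool :=
  [forall i : 'I_n, (a i < beta n h i.+1)%N].

Definition mono (n : nat) (a : {ffun 'I_n -> 'I_n}) : mpoly n :=
  \prod_(i < n) X n i.+1 ^+ a i.

Definition combB (n : nat) (h : nat -> nat) (c : {ffun 'I_n -> 'I_n} -> int)
  : mpoly n :=
  \sum_(a : {ffun 'I_n -> 'I_n} | inB n h a) (c a)%:~R * mono n a.

(* Main.v *)
Require Import Defs.
From Stdlib Require Import ClassicalEpsilon Lia.
From HB Require Import structures.
From mathcomp Require Import all_boot all_order all_algebra.
Import GRing.Theory.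
Import Pdiv.Ring Pdiv.RingMonic.
Local Open Scope ring_scope.

Lemma hcomp0 (R : comNzRingType) (s : seq R) : hcomp 0 s = 1.
Proof.
elim: s => [|x s IH] //=.
by rewrite big_ord1 expr0 mul1r IH.
Qed.

Lemma hcomp_morph (R S : comNzRingType) (f : {rmorphism R -> S}) r (s : seq R) :
  f (hcomp r s) = hcomp r (map f s).
Proof.
elim: s r => [|x s IH] r /=; first by rewrite rmorph_nat.
rewrite rmorph_sum; apply: eq_bigr => k _.
by rewrite rmorphM rmorphXn IH.
Qed.

Lemma mvarS N j : (j < N)%N -> mvar N.+1 j = (mvar N j)%:P.
Proof. by move=> hj /=; rewrite (ltn_eqF hj). Qed.

Lemma mvarN N : mvar N.+1 N = 'X.
Proof. by rewrite /= eqxx. Qed.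
Section Ev.
Variable S : comNzRingType.
Variable v : nat -> S.
Fixpoint ev (n : nat) : {rmorphism mpoly n -> S} :=
  match n return {rmorphism mpoly n -> S} with
  | 0 => (intr : {rmorphism int -> S})
  | n'.+1 => (@horner_morph _ _ (ev n') (v n') (fun x => mulrC (v n') (ev n' x)) : {rmorphism {poly mpoly n'} -> S})
  end.

Lemma ev_var N j : (j < N)%N -> ev N (mvar N j) = v j.
Proof.
elim: N => [//|N IH] hj /=.
case: eqP => [->|/eqP hne]; first by rewrite horner_morphX.
rewrite horner_morphC IH //.
by move: hj; rewrite ltnS leq_eqVlt (negbTE hne).
Qed.
End Ev.

Lemma rm_uniq (S : comNzRingType) N (f g : {rmorphism mpoly N -> S}) :
  (forall j, (j < N)%N -> f (mvar N j) = g (mvar N j)) -> f =1 g.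
Proof.
elim: N f g => [|N IH] f g H p.
  by rewrite -[p]intz !rmorph_int.
pose f' : {rmorphism mpoly N -> S} := (f \o (polyC : {rmorphism mpoly N -> {poly mpoly N}})).
pose g' : {rmorphism mpoly N -> S} := (g \o (polyC : {rmorphism mpoly N -> {poly mpoly N}})).
have Hfg : f' =1 g'.
  apply: IH => j hj; rewrite /f' /g' /= -mvarS //; apply: H; exact: ltnW.
have HX : f ('X : {poly mpoly N}) = g ('X : {poly mpoly N}).
  by rewrite -mvarN; apply: H.
have -> : p = \sum_(i < size (p : {poly mpoly N})) ((p : {poly mpoly N})`_i)%:P * 'X^i.
  by rewrite -[LHS]coefK poly_def; apply: eq_bigr => i _; rewrite mul_polyC.
rewrite !rmorph_sum; apply: eq_bigr => i _.
rewrite !rmorphM !rmorphXn HX.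
by have := Hfg ((p : {poly mpoly N})`_i); rewrite /f' /g' /= => ->.
Qed.
Section Core.
Variable d : nat -> nat.

Definition L N m : seq (mpoly N) := rev [seq mvar N j | j <- iota 0 m].
Definition Kg N m : mpoly N := hcomp (d m) (L N m).
Definition inK N (f : mpoly N) : Prop :=
  exists g : nat -> mpoly N, f = \sum_(1 <= m < N.+1) g m * Kg N m.

Fixpoint red (N : nat) : mpoly N -> Prop :=
  match N return mpoly N -> Prop with
  | 0 => fun _ => True
  | N'.+1 => fun f : {poly mpoly N'} => (size f <= d N'.+1)%N /\ forall k, red N' f`_k
  end.

Lemma L_C N m : (m <= N)%N -> map polyC (L N m) = L N.+1 m.
Proof.
move=> hm; rewrite /L map_rev -map_comp; congr rev.
have H : {in iota 0 m, (polyC \o mvar N) =1 mvar N.+1}.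
  move=> j; rewrite mem_iota add0n => /andP[_ hj]; rewrite /comp.
  by rewrite mvarS // (leq_trans hj hm).
change (map (polyC \o mvar N) (iota 0 m) = map (fun j => (mvar N.+1 j : {poly mpoly N})) (iota 0 m)).
exact/eq_in_map.
Qed.

Lemma KgC N m : (m <= N)%N -> (Kg N m)%:P = Kg N.+1 m.
Proof.
by move=> hm; rewrite /Kg (hcomp_morph _ _ (polyC : {rmorphism mpoly N -> {poly mpoly N}})) L_C.
Qed.

Lemma L_top N : L N.+1 N.+1 = 'X :: map polyC (L N N).
Proof.
rewrite L_C // /L.
have -> : iota 0 N.+1 = rcons (iota 0 N) N by rewrite -cats1 -addn1 iotaD.
by rewrite map_rcons rev_rcons mvarN.
Qed.

Lemma Ktop N : Kg N.+1 N.+1 =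
  ('X^(d N.+1) + \poly_(k < d N.+1) hcomp (d N.+1 - k) (L N N) : {poly mpoly N}).
Proof.
rewrite /Kg L_top /= big_ord_recr /= subnn.
rewrite hcomp0 mulr1 addrC; congr (_ + _).
rewrite poly_def; apply: eq_bigr => k _.
by rewrite -(hcomp_morph _ _ (polyC : {rmorphism mpoly N -> {poly mpoly N}})) mulrC mul_polyC.
Qed.

Lemma Ktop_monic N : Kg N.+1 N.+1 \is monic.
Proof.
rewrite Ktop monicE lead_coefDl ?lead_coefXn //.
have := size_polyXn (mpoly N) (d N.+1).
move=> ->; by rewrite ltnS size_poly.
Qed.

Lemma Ktop_size N : size (Kg N.+1 N.+1) = (d N.+1).+1.
Proof.
have hX := size_polyXn (mpoly N) (d N.+1).
rewrite Ktop size_polyDl; first by move: hX => ->.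
by move: hX => ->; rewrite ltnS size_poly.
Qed.

End Core.
Section Core2.
Variable d : nat -> nat.
Local Notation inK := (inK d).
Local Notation Kg := (Kg d).
Local Notation red := (red d).

Lemma inK0 N : inK N 0.
Proof. by exists (fun _ => 0); rewrite big1 // => i _; rewrite mul0r. Qed.

Lemma inKD N p q : inK N p -> inK N q -> inK N (p + q).
Proof.
move=> [g ->] [g' ->]; exists (fun i => g i + g' i).
by rewrite -big_split /=; apply: eq_bigr => i _; rewrite mulrDl.
Qed.

Lemma inKM N a p : inK N p -> inK N (a * p).
Proof.
move=> [g ->]; exists (fun i => a * g i).
by rewrite mulr_sumr; apply: eq_bigr => i _; rewrite mulrA.
Qed.

Lemma inKN N p : inK N p -> inK N (- p).
Proof. by move=> H; rewrite -mulN1r; apply: inKM. Qed.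

Lemma inKB N p q : inK N p -> inK N q -> inK N (p - q).
Proof. by move=> Hp Hq; apply: inKD => //; apply: inKN. Qed.

Lemma inKgen N m : (1 <= m <= N)%N -> inK N (Kg N m).
Proof.
move=> hm; exists (fun i => (i == m)%:R).
have hin : m \in index_iota 1 N.+1 by rewrite mem_index_iota ltnS.
rewrite (bigD1_seq m hin (iota_uniq _ _)) /= eqxx mul1r big1 ?addr0 //.
by move=> i /negbTE ->; rewrite mul0r.
Qed.

Lemma inK_sum N (I : Type) (s : seq I) (P : pred I) (F : I -> mpoly N) :
  (forall i, P i -> inK N (F i)) -> inK N (\sum_(i <- s | P i) F i).
Proof.
move=> H; apply: (big_ind (inK N)) => //; [exact: inK0 | exact: inKD].
Qed.

Lemma inKC N (q : mpoly N) : inK N q -> inK N.+1 (q%:P : {poly mpoly N}).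
Proof.
move=> [g ->]; rewrite rmorph_sum big_seq; apply: inK_sum => m.
rewrite mem_index_iota ltnS => /andP[h1 h2].
rewrite /= polyCM KgC //; apply: inKM; apply: inKgen.
by rewrite h1 (leq_trans h2).
Qed.

End Core2.
Section Core3.
Variable d : nat -> nat.
Local Notation inK := (inK d).
Local Notation Kg := (Kg d).
Local Notation red := (red d).

Lemma red0 N : red N 0.
Proof.
elim: N => [|N IH] //=; split; first by rewrite size_poly0.
by move=> k; rewrite coef0.
Qed.

Lemma inK_poly N n (E : nat -> mpoly N) :
  (forall k, inK N (E k)) -> inK N.+1 (\poly_(k < n) E k : {poly mpoly N}).
Proof.
move=> H; rewrite poly_def; apply: inK_sum => k _.
rewrite -mul_polyC mulrC; apply: inKM; exact: inKC.
Qed.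

Lemma core N : (forall f : mpoly N, exists r, red N r /\ inK N (f - r)) /\
               (forall r : mpoly N, red N r -> inK N r -> r = 0).
Proof.
elim: N => [|N [IHs IHi]].
  split.
    by move=> f; exists f; split => //; rewrite subrr; apply: inK0.
  by move=> r _ [g ->]; rewrite big_geq.
pose P : {poly mpoly N} := Kg N.+1 N.+1.
have Pm : P \is monic := Ktop_monic d N.
have Ps : size P = (d N.+1).+1 := Ktop_size d N.
split.
  move=> f.
  pose r0 : {poly mpoly N} := rmodp (R := mpoly N) f P.
  have Hf : (f : {poly mpoly N}) = rdivp (R := mpoly N) f P * P + r0 := rdivp_eq Pm f.
  have Hr0 : (size r0 <= d N.+1)%N.
    by rewrite -ltnS -Ps ltn_rmodpN0 // monic_neq0.
  have H k : {r : mpoly N | red N r /\ inK N (r0`_k - r)}.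
    exact: constructive_indefinite_description (IHs r0`_k).
  pose rk k := proj1_sig (H k).
  exists (\poly_(k < d N.+1) rk k : {poly mpoly N}); split.
    split; first exact: size_poly.
    move=> k; rewrite coef_poly; case: ifP => _; last exact: red0.
    exact: (proj1 (proj2_sig (H k))).
  have E : (r0 - \poly_(k < d N.+1) rk k : {poly mpoly N}) =
           \poly_(k < d N.+1) (r0`_k - rk k).
    apply/polyP => i; rewrite coefB !coef_poly.
    case: ifP => // hi; rewrite subr0 nth_default //.
    by rewrite (leq_trans Hr0) // leqNgt hi.
  have -> : f - \poly_(k < d N.+1) rk k =
            rdivp f P * P + \poly_(k < d N.+1) (r0`_k - rk k).
    by rewrite {1}Hf -addrA; congr (_ + _); exact: E.
  apply: inKD.
    have HP : inK N.+1 P := inKgen d N.+1 N.+1 (leqnn _).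
    apply: inKM. exact: HP.
  apply: inK_poly => k.
  exact: (proj2 (proj2_sig (H k))).
move=> r /= [Hs Hk] [g Hr].
pose q m := rdivp (R:=mpoly N) (g m) P.
pose s m := rmodp (R:=mpoly N) (g m) P.
pose S : {poly mpoly N} := \sum_(1 <= m < N.+1) s m * (Kg N m)%:P.
pose Q : {poly mpoly N} := \sum_(1 <= m < N.+1) q m * (Kg N m)%:P + g N.+1.
have E : (r : {poly mpoly N}) = Q * P + S.
  rewrite Hr big_nat_recr //= /Q /S mulrDl mulr_suml addrAC -big_split /=.
  congr (_ + _); apply: eq_big_nat => m /andP[_ hm].
  rewrite -KgC // {1}(rdivp_eq Pm (g m)) mulrDl mulrAC.
  by [].
have hs m : (size (s m) <= d N.+1)%N.
  by rewrite -ltnS -Ps ltn_rmodpN0 // monic_neq0.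
have HS : (size S <= d N.+1)%N.
  rewrite /S; apply: (big_ind (fun p : {poly mpoly N} => size p <= d N.+1)%N).
  - by rewrite size_poly0.
  - by move=> p1 p2 h1 h2; rewrite (leq_trans (size_polyD _ _)) // geq_max h1 h2.
  move=> m _; rewrite (leq_trans (size_polyMleq _ _)) //.
  rewrite (leq_trans _ (hs m)) //.
  have := size_polyC_leq1 (Kg N m).
  by case: (size (Kg N m)%:P) => [|[|//]] _; rewrite ?addn0 ?addn1 //= leq_pred.
have HQ : Q = 0.
  apply/eqP; apply: contraT => nz.
  have : (size (Q * P)%R <= d N.+1)%N.
    have -> : Q * P = (r : {poly mpoly N}) - S by rewrite E addrK.
    by rewrite (leq_trans (size_polyD _ _)) // geq_max Hs size_polyN HS.
  rewrite size_Mmonic // Ps addnS /= -{2}(add0n (d N.+1)) leq_add2r.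
  by rewrite leqNgt size_poly_gt0 nz.
have rS : (r : {poly mpoly N}) = S by rewrite E HQ mul0r add0r.
apply/polyP => k; rewrite coef0; apply: IHi; first exact: Hk.
exists (fun m => (s m)`_k); rewrite rS /S coef_sum.
by apply: eq_bigr => m _; rewrite coefMC.
Qed.

End Core3.
Fixpoint cf (N : nat) (e : nat -> nat) : mpoly N -> int :=
  match N return mpoly N -> int with
  | 0 => fun f => f
  | N'.+1 => fun f : {poly mpoly N'} => cf N' e f`_(e N')
  end.

Lemma cfD N e (p q : mpoly N) : cf N e (p + q) = cf N e p + cf N e q.
Proof. by elim: N e p q => [//|N IH] e p q /=; rewrite coefD IH. Qed.

Lemma cf0 N e : cf N e 0 = 0.
Proof. by elim: N => [//|N IH] /=; rewrite coef0 IH. Qed.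

Lemma cfN N e (p : mpoly N) : cf N e (- p) = - cf N e p.
Proof. by elim: N e p => [//|N IH] e p /=; rewrite coefN IH. Qed.

Lemma cfMz N e (p : mpoly N) k : cf N e (p *~ k) = cf N e p * k.
Proof.
elim: N e p => [|N IH] e p /=; first by rewrite mulrzz.
by rewrite coefMrz IH.
Qed.

Lemma cf_sum N e (I : Type) (s : seq I) (P : pred I) (F : I -> mpoly N) :
  cf N e (\sum_(i <- s | P i) F i) = \sum_(i <- s | P i) cf N e (F i).
Proof. exact: (big_morph _ (cfD N e) (cf0 N e)). Qed.

Lemma cf_local N e e' (p : mpoly N) :
  (forall j, (j < N)%N -> e j = e' j) -> cf N e p = cf N e' p.
Proof.
elim: N p => [//|N IH] p H /=.
rewrite H // IH // => j hj; apply: H; exact: ltnW.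
Qed.

Definition upd (e : nat -> nat) N k := fun j => if j == N then k else e j.

Lemma cf_nz N (p : mpoly N) : p != 0 -> exists e, cf N e p != 0.
Proof.
elim: N p => [|N IH] p nz; first by exists (fun _ => 0%N).
have : (p : {poly mpoly N})`_(size p).-1 != 0.
  by rewrite -lead_coefE lead_coef_eq0.
move=> /IH [e he]; exists (upd e N (size p).-1) => /=.
rewrite /upd eqxx (@cf_local _ _ e) //.
by move=> j hj; rewrite (ltn_eqF hj).
Qed.

Lemma cf_ext N (p q : mpoly N) : (forall e, cf N e p = cf N e q) -> p = q.
Proof.
move=> H; apply/eqP; rewrite -subr_eq0; apply/negPn/negP => /cf_nz [e].
by rewrite cfD cfN H subrr.
Qed.

Definition monoE N (e : nat -> nat) : mpoly N := \prod_(j < N) mvar N j ^+ e j.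

Lemma monoE_S N e :
  (monoE N.+1 e : {poly mpoly N}) = (monoE N e)%:P * 'X^(e N).
Proof.
have E1 : (\prod_(j < N) (mvar N j)%:P ^+ e j : {poly mpoly N}) =
          (\prod_(j < N) mvar N j ^+ e j)%:P.
  by rewrite rmorph_prod; apply: eq_bigr => j _; rewrite rmorphXn.
rewrite -E1 /monoE big_ord_recr mvarN.
apply: (f_equal2 (fun x y => x * y)) => //.
apply: eq_bigr => j _; rewrite mvarS //; by case: j.
Qed.

Lemma cf_mono N e' e :
  cf N e' (monoE N e) = (all (fun j => e' j == e j) (iota 0 N))%:R.
Proof.
elim: N => [|N IH]; first by rewrite /monoE big_ord0.
have -> : iota 0 N.+1 = rcons (iota 0 N) N by rewrite -cats1 -addn1 iotaD.
rewrite all_rcons /= monoE_S coefCM coefXn.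
case: eqP => _; last by rewrite mulr0 cf0.
by rewrite mulr1 IH.
Qed.
Section RedCf.
Variable d : nat -> nat.
Local Notation red := (red d).

Lemma red_cf N (p : mpoly N) e : red N p -> cf N e p != 0 ->
  forall j, (j < N)%N -> (e j < d j.+1)%N.
Proof.
elim: N p e => [//|N IH] p e /= [Hs Hk] nz j hj.
have hN : (e N < d N.+1)%N.
  apply: leq_trans Hs; rewrite ltnNge; apply/negP => hle.
  by move: nz; rewrite nth_default // cf0 eqxx.
rewrite ltnS leq_eqVlt in hj; case/orP: hj => [/eqP -> //|hj].
exact: (IH _ e (Hk (e N)) nz).
Qed.

Lemma cf_red N (p : mpoly N) :
  (forall e, cf N e p != 0 -> forall j, (j < N)%N -> (e j < d j.+1)%N) -> red N p.
Proof.
elim: N p => [//|N IH] p H /=; split.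
  rewrite leqNgt; apply/negP => hs.
  have nz : (p : {poly mpoly N}) != 0 by apply: gt_size_poly_neq0 hs.
  have : (p : {poly mpoly N})`_(size p).-1 != 0.
    by rewrite -lead_coefE lead_coef_eq0.
  move=> /cf_nz [e he].
  have := H (upd e N (size p).-1).
  rewrite /= /upd eqxx (@cf_local _ _ e); last by move=> j hj; rewrite (ltn_eqF hj).
  move=> /(_ he N (ltnSn N)); rewrite eqxx.
  move=> h; have hp := prednK (leq_ltn_trans (leq0n _) hs).
  by move: hs; rewrite ltnNge -hp h.
move=> k; apply: IH => e he j hj.
have := H (upd e N k).
rewrite /= /upd eqxx (@cf_local _ _ e); last by move=> i hi; rewrite (ltn_eqF hi).
move=> /(_ he j (ltnW hj)); by rewrite (ltn_eqF hj).
Qed.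

End RedCf.
Definition sig n : {rmorphism mpoly n -> mpoly n} :=
  ev (mpoly n) (fun j => mvar n (n.-1 - j)) n.

Lemma sig_var n j : (j < n)%N -> sig n (mvar n j) = mvar n (n.-1 - j).
Proof. exact: ev_var. Qed.

Lemma sigK n p : sig n (sig n p) = p.
Proof.
have := @rm_uniq _ n (sig n \o sig n) (idfun : {rmorphism mpoly n -> mpoly n}).
apply => j hj /=.
have h2 : (n.-1 - j < n)%N by apply/ltP; move/ltP: hj; rewrite -?minusE; lia.
rewrite !sig_var //; congr mvar; apply/eqP; rewrite -(eqn_add2r 0).
apply/eqP; move/ltP: hj; rewrite -?minusE -?plusE; lia.
Qed.
Ltac nlia := unfold subn, subn_rec, addn, addn_rec in *; lia.

Definition dd n (h : nat -> nat) m := beta n h (n.+1 - m).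

Lemma sig_Jgen n h i : (1 <= i <= n)%N ->
  sig n (Jgen n h i) = Kg (dd n h) n (n.+1 - i).
Proof.
move=> /andP[/leP h1 /leP h2]; rewrite /Jgen /Kg (hcomp_morph _ _ (sig n)) /dd.
have -> : (n.+1 - (n.+1 - i) = i)%N by nlia.
congr hcomp.
rewrite -map_comp /L; apply: (@eq_from_nth _ 0).
  by rewrite size_map size_iota size_rev size_map size_iota; nlia.
move=> k; rewrite size_map size_iota => /ltP hk.
rewrite (nth_map 0%N) ?size_iota; last by apply/ltP.
rewrite nth_iota; last by apply/ltP.
rewrite nth_rev ?size_map ?size_iota; last by apply/ltP; nlia.
rewrite (nth_map 0%N) ?size_iota; last by apply/ltP; nlia.
rewrite nth_iota; last by apply/ltP; nlia.
rewrite /= /X sig_var; last by apply/ltP; nlia.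
congr mvar; nlia.
Qed.
Definition inI N (G : nat -> mpoly N) (f : mpoly N) : Prop :=
  exists g : nat -> mpoly N, f = \sum_(1 <= m < N.+1) g m * G m.

Lemma inI0 N G : inI N G 0.
Proof. by exists (fun _ => 0); rewrite big1 // => i _; rewrite mul0r. Qed.

Lemma inID N G p q : inI N G p -> inI N G q -> inI N G (p + q).
Proof.
move=> [g ->] [g' ->]; exists (fun i => g i + g' i).
by rewrite -big_split /=; apply: eq_bigr => i _; rewrite mulrDl.
Qed.

Lemma inIM N G a p : inI N G p -> inI N G (a * p).
Proof.
move=> [g ->]; exists (fun i => a * g i).
by rewrite mulr_sumr; apply: eq_bigr => i _; rewrite mulrA.
Qed.

Lemma inIgen N G m : (1 <= m <= N)%N -> inI N G (G m).
Proof.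
move=> hm; exists (fun i => (i == m)%:R).
have hin : m \in index_iota 1 N.+1 by rewrite mem_index_iota ltnS.
rewrite (bigD1_seq m hin (iota_uniq _ _)) /= eqxx mul1r big1 ?addr0 //.
by move=> i /negbTE ->; rewrite mul0r.
Qed.

Lemma inI_sum N G (I : Type) (s : seq I) (P : pred I) (F : I -> mpoly N) :
  (forall i, P i -> inI N G (F i)) -> inI N G (\sum_(i <- s | P i) F i).
Proof.
move=> H; apply: (big_ind (inI N G)) => //; [exact: inI0 | exact: inID].
Qed.

Lemma inJ_sig n h f : inJ n h f -> inK (dd n h) n (sig n f).
Proof.
move=> [g ->]; rewrite rmorph_sum big_seq /=; apply: inK_sum => i.
rewrite mem_index_iota => /andP[h1 h2].
rewrite rmorphM sig_Jgen ?h1 //; apply: inKM; apply: inKgen.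
by apply/andP; split; apply/leP; move/leP: h1; move/ltP: h2; nlia.
Qed.

Lemma inK_sig n h q : inK (dd n h) n q -> inJ n h (sig n q).
Proof.
move=> [g ->]; rewrite rmorph_sum big_seq /=.
change (inI n (Jgen n h) (\sum_(i <- index_iota 1 n.+1 | i \in index_iota 1 n.+1)
   sig n (g i * Kg (dd n h) n i))).
apply: inI_sum => m; rewrite mem_index_iota => /andP[/leP h1 /ltP h2].
have hm : (m = n.+1 - (n.+1 - m))%N by nlia.
rewrite rmorphM hm -sig_Jgen ?sigK; last by apply/andP; split; apply/leP; nlia.
apply: inIM; apply: inIgen; apply/andP; split; apply/leP; nlia.
Qed.
Definition es n (a : {ffun 'I_n -> 'I_n}) : nat -> nat :=
  fun j => oapp (fun i : 'I_n => val (a (rev_ord i))) 0%N (insub j).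
Arguments es {n}.

Lemma es_ord n a (j : 'I_n) : es a j = a (rev_ord j).
Proof. by rewrite /es valK. Qed.

Lemma sig_mono n a : sig n (mono n a) = monoE n (es a).
Proof.
rewrite /mono /monoE rmorph_prod [RHS](reindex_inj rev_ord_inj) /=.
apply: eq_bigr => i _; rewrite rmorphXn /X sig_var; last by apply/ltP; move/ltP: (ltn_ord i); nlia.
have -> : es a (n - i.+1) = a i.
  by rewrite -[(n - i.+1)%N]/(val (rev_ord i)) es_ord rev_ordK.
congr (mvar _ _ ^+ _).
by move/ltP: (ltn_ord i); nlia.
Qed.

Lemma cf_sigcomb n h c e : cf n e (sig n (combB n h c)) =
  \sum_(a | inB n h a) c a * (all (fun j => e j == es a j) (iota 0 n))%:R.
Proof.
rewrite /combB rmorph_sum cf_sum; apply: eq_bigr => a _.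
by rewrite rmorphM rmorph_int sig_mono mulrzl cfMz cf_mono mulrC.
Qed.

Lemma es_inj n (a b : {ffun 'I_n -> 'I_n}) e :
  all (fun j => e j == es a j) (iota 0 n) -> all (fun j => e j == es b j) (iota 0 n) ->
  a = b.
Proof.
move=> /allP Ha /allP Hb; apply/ffunP => i; apply: val_inj.
have hi : (rev_ord i : nat) \in iota 0 n by rewrite mem_iota add0n ltn_ord.
move: (Ha _ hi) (Hb _ hi); rewrite !es_ord rev_ordK => /eqP -> /eqP.
by [].
Qed.

Arguments es_inj {n a b e}.

Lemma cf_sigcomb_at n h c a0 : inB n h a0 -> cf n (es a0) (sig n (combB n h c)) = c a0.
Proof.
move=> ha; rewrite cf_sigcomb (bigD1 a0) //=.
have -> : all (fun j => es a0 j == es a0 j) (iota 0 n) by apply/allP => j _.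
rewrite mulr1 big1 ?addr0 // => a /andP[_ hne].
case: (boolP (all (fun j => es a0 j == es a j) (iota 0 n))) => H; last by rewrite mulr0.
have : all (fun j => es a0 j == es a0 j) (iota 0 n) by apply/allP => j _.
by move/(es_inj H) => E; rewrite E eqxx in hne.
Qed.

Lemma beta_le n h i : (beta n h i <= i)%N.
Proof. exact: leq_subr. Qed.
Theorem mainTheorem10 (n : nat) (h : nat -> nat) (Hh : hessenberg n h) :
  (forall f : mpoly n, exists c : {ffun 'I_n -> 'I_n} -> int,
      inJ n h (f - combB n h c)) /\
  (forall c : {ffun 'I_n -> 'I_n} -> int,
      inJ n h (combB n h c) -> forall a, inB n h a -> c a = 0).
Proof.
have [Cs Ci] := core (dd n h) n.
have Hdd j : (j < n)%N -> dd n h j.+1 = beta n h (n - j).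
  by move=> /ltP hj; rewrite /dd; congr beta; nlia.
split.
  move=> f; have [r [Hr HK]] := Cs (sig n f).
  pose c := fun a : {ffun 'I_n -> 'I_n} => cf n (es a) r; exists c.
  have Hsr : sig n (combB n h c) = r.
    apply: cf_ext => e; rewrite cf_sigcomb.
    case: (boolP [exists a, inB n h a && all (fun j => e j == es a j) (iota 0 n)]).
      case/existsP => a0 /andP[ha0 hag].
      rewrite (bigD1 a0) //= hag mulr1 big1 ?addr0.
        rewrite /c; apply: cf_local => j hj.
        by move/allP: hag => /(_ j); rewrite mem_iota add0n hj => /(_ isT) /eqP.
      move=> a /andP[_ hne].
      case: (boolP (all (fun j => e j == es a j) (iota 0 n))) => H; last by rewrite mulr0.
      by move: hne; rewrite (es_inj H hag) eqxx.
    move=> hne; rewrite big1; last first.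
      move=> a ha; case: (boolP (all (fun j => e j == es a j) (iota 0 n))) => H; last by rewrite mulr0.
      by case/negP: hne; apply/existsP; exists a; rewrite ha H.
    apply/eqP; rewrite eq_sym; apply/negP => /negP nz.
    have Hrg := @red_cf (dd n h) n r e Hr nz.
    case/negP: hne; apply/existsP.
    have Hb i : (i < n)%N -> (e (n.-1 - i) < i.+1)%N.
      move=> hi; have hj : (n.-1 - i < n)%N by apply/ltP; move/ltP: hi; nlia.
      have := Hrg _ hj; rewrite Hdd //.
      have -> : (n - (n.-1 - i) = i.+1)%N by move/ltP: hi; nlia.
      move=> H; exact: leq_trans H (beta_le _ _ _).
    pose a0 : {ffun 'I_n -> 'I_n} := [ffun i : 'I_n => insubd i (e (n.-1 - i)%N)].
    have Ha0 (i : 'I_n) : val (a0 i) = e (n.-1 - i)%N.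
      rewrite /a0 ffunE val_insubd.
      by rewrite (leq_trans (Hb i (ltn_ord i))) // ltn_ord.
    exists a0; apply/andP; split.
      apply/forallP => i; rewrite Ha0.
      have hi := ltn_ord i.
      have hj : (n.-1 - i < n)%N by apply/ltP; move/ltP: hi; nlia.
      have := Hrg _ hj; rewrite Hdd //.
      by have -> : (n - (n.-1 - i) = i.+1)%N by move/ltP: hi; nlia.
    apply/allP => j; rewrite mem_iota add0n => hj.
    rewrite -[j]/(val (Ordinal hj)) es_ord Ha0 /=.
    by have -> : (n.-1 - (n - j.+1) = j)%N by move/ltP: hj; nlia.
  have := @inK_sig n h _ HK; rewrite rmorphB sigK -Hsr sigK.
  by [].
move=> c Hc a ha.
have HK := @inJ_sig n h _ Hc.
have Hred : red (dd n h) n (sig n (combB n h c)).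
  apply: cf_red => e; rewrite cf_sigcomb => nz j hj.
  case: (boolP [exists a, inB n h a && all (fun j => e j == es a j) (iota 0 n)]).
    case/existsP => a0 /andP[ha0 hag].
    move/allP: hag => /(_ j); rewrite mem_iota add0n hj => /(_ isT) /eqP ->.
    rewrite -[j]/(val (Ordinal hj)) es_ord Hdd //.
    move/forallP: ha0 => /(_ (rev_ord (Ordinal hj))) /=.
    by have -> : ((n - j.+1).+1 = n - j)%N by move/ltP: hj; nlia.
  move=> hne; case/negP: nz; apply/eqP; apply: big1 => a1 ha1.
  case: (boolP (all (fun j => e j == es a1 j) (iota 0 n))) => H; last by rewrite mulr0.
  by case/negP: hne; apply/existsP; exists a1; rewrite ha1 H.
have H0 := Ci _ Hred HK.
by rewrite -(@cf_sigcomb_at n h c a ha) H0 cf0.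
Qed.
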